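(* Let $A$ be the symmetric circulant $5\times5$ matrix with first row $(8,5,1,1,5)$ (i.e. $a_{ii}=8$, $a_{ij}=5$ if $j\equiv i\pm1 \pmod 5$, $a_{ij}=1$ otherwise), and let $A'$ be the symmetric circulant $5\times 5$ matrix with first row $(6,4,1,1,4)$. Then $A$ is completely positive, has exactly two minimal CP factorizations, and has infinitely many CP factorizations; and $A'$ is completely positive with the unique CP factorization $A'=W^2(W^2)^T$, where $W$ is the $5\times5$ matrix whose $i$-th column is $\mathbf e_i+\mathbf e_{i\oplus1}$ ($\oplus$ denoting addition modulo $5$ on $\{1,\dots,5\}$), so that $W^2$ is the circulant matrix with first row $(1,0,0,1,2)$.
   Context: A symmetric $n\times n$ matrix $A$ is completely positive if $A=BB^T$ for some entrywise nonnegative $n\times k$ matrix $B$; such an equality is a CP factorization of $A$. Only CP factorizations in which the columns of $B$ are pairwise linearly independent are considered, and two CP factorizations $A=BB^T=CC^T$ are considered equal if $C=BP$ for a permutation matrix $P$. The cp-rank of $A$ is the minimal number of columns of such a nonnegative $B$; a CP factorization with that many columns is called minimal. $\mathbf e_1,\dots,\mathbf e_5$ are the standard basis vectors of $\mathbb R^5$. *)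

(* Defs.v *)
From HB Require Import structures.
From mathcomp Require Import all_boot all_order all_algebra all_fingroup.
From mathcomp Require Import reals.
Set Implicit Arguments. Unset Strict Implicit. Unset Printing Implicit Defensive.
Import Order.TTheory GRing.Theory Num.Theory.
Local Open Scope ring_scope.

Section CP.
Variable R : realType.

Definition nonneg_mx m k (B : 'M[R]_(m, k)) : Prop := forall i j, 0 <= B i j.

Definition lin_indep2 m (u v : 'cV[R]_m) : Prop :=
  forall a b : R, a *: u + b *: v = 0 -> a = 0 /\ b = 0.

Definition completely_positive n (A : 'M[R]_n) : Prop :=
  exists k (B : 'M[R]_(n, k)), nonneg_mx B /\ A = B *m B^T.

Definition cp_factorization n k (A : 'M[R]_n) (B : 'M[R]_(n, k)) : Prop :=
  [/\ nonneg_mx B,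
      (forall j1 j2 : 'I_k, j1 != j2 -> lin_indep2 (col j1 B) (col j2 B))
    & A = B *m B^T].

Definition minimal_cp_factorization n k (A : 'M[R]_n) (B : 'M[R]_(n, k)) : Prop :=
  cp_factorization A B /\
  (forall k' (B' : 'M[R]_(n, k')), nonneg_mx B' -> A = B' *m B'^T -> (k <= k')%N).

Definition cp_equiv n k k' (B : 'M[R]_(n, k)) (C : 'M[R]_(n, k')) : Prop :=
  exists e : k = k', exists s : 'S_k', C = castmx (erefl n, e) B *m perm_mx s.

Definition fact_of n := {k : nat & 'M[R]_(n, k)}.

Definition fequiv n (F G : fact_of n) : Prop := cp_equiv (projT2 F) (projT2 G).

(* 5x5 circulant matrix with first row r = (r_0,...,r_4) *)
Definition circ5 (r : seq R) : 'M[R]_5 :=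
  \matrix_(i < 5, j < 5) r`_(((nat_of_ord j + 5 - nat_of_ord i) %% 5)%N).

Definition W5 : 'M[R]_5 :=
  \matrix_(i < 5, j < 5) ((nat_of_ord i == nat_of_ord j)%:R + ((nat_of_ord i == ((nat_of_ord j).+1 %% 5)%N)%:R)).

End CP.

(* Main.v *)
Require Import Defs.
From HB Require Import structures.
From mathcomp Require Import all_boot all_order all_algebra all_fingroup.
From mathcomp Require Import reals ring lra.
Import Order.TTheory GRing.Theory Num.Theory.
Local Open Scope ring_scope.

Set Implicit Arguments. Unset Strict Implicit. Unset Printing Implicit Defensive.

Section Aux.
Variable R : realType.

Definition nx1 (t : nat) : nat := if t == 4%N then 0%N else t.+1.
Definition nx2 t := nx1 (nx1 t).
Definition nx3 t := nx1 (nx2 t).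
Definition nx4 t := nx1 (nx3 t).

Definition qv (a b c d e : R) :=
  a*a + b*b + c*c+d*d+e*e - 2*(a*b+b*c+c*d+d*e+e*a) + 2*(a*c+b*d+c*e+d*a+e*b).

Lemma qv_gen a b c d e : 0 <= a -> 0<= b -> 0 <= c -> 0 <= d -> 0 <= e -> e <= d ->
  0 <= qv a b c d e /\ (qv a b c d e = 0 ->
   [\/ [/\ d = 0, e = 0 & b = a + c],
       [/\ e = 0, a = 0 & c = b + d],
       [/\ a = 0, b = 0 & d = c + e] |
       [/\ b = 0, c = 0 & e = d + a]]).
Proof.
move=> ha hb hc hd he hed.
have -> : qv a b c d e = (a-b+c-d+e)^+2 + 4*a*(d-e) + 4*b*e by rewrite /qv; ring.
have h1 : 0 <= (a-b+c-d+e)^+2 by apply: sqr_ge0.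
have h2 : 0 <= 4*a*(d-e) by apply: mulr_ge0; [apply: mulr_ge0=>//|lra].
have h3 : 0 <= 4*b*e by apply: mulr_ge0=>//; apply: mulr_ge0.
split; first by lra.
move=> h0.
have : (a-b+c-d+e)^+2 == 0 by apply/eqP; lra.
rewrite sqrf_eq0 => /eqP e1.
have e2 : 4*a*(d-e) = 0 by lra.
have e3 : 4*b*e = 0 by lra.
move/eqP: e2; rewrite !mulf_eq0 => /orP[/orP[/eqP|/eqP]|/eqP] e2; first lra.
- move/eqP: e3; rewrite !mulf_eq0 => /orP[/orP[/eqP|/eqP]|/eqP] e3; first lra.
  + apply: Or43; split; lra.
  + apply: Or42; split; lra.
- move/eqP: e3; rewrite !mulf_eq0 => /orP[/orP[/eqP|/eqP]|/eqP] e3; first lra.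
  + apply: Or44; split; lra.
  + apply: Or41; split; lra.
Qed.

Definition qf (x : nat -> R) := qv (x 0%N) (x 1%N) (x 2%N) (x 3%N) (x 4%N).

Definition cond (x : nat -> R) (t : 'I_5) : bool :=
  [&& x (nx3 t) == 0, x (nx4 t) == 0 & x (nx1 t) == x t + x (nx2 t)].

Ltac wit := first [
  (exists (@Ordinal 5 0 isT); apply/and3P; rewrite /=; split; apply/eqP; lra) |
  (exists (@Ordinal 5 1 isT); apply/and3P; rewrite /=; split; apply/eqP; lra) |
  (exists (@Ordinal 5 2 isT); apply/and3P; rewrite /=; split; apply/eqP; lra) |
  (exists (@Ordinal 5 3 isT); apply/and3P; rewrite /=; split; apply/eqP; lra) |
  (exists (@Ordinal 5 4 isT); apply/and3P; rewrite /=; split; apply/eqP; lra) ].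

Lemma horn (x : nat -> R) : (forall i, (i < 5)%N -> 0 <= x i) ->
  0 <= qf x /\ (qf x = 0 -> exists t, cond x t).
Proof.
move=> hx.
have h0 := hx 0%N isT; have h1 := hx 1%N isT; have h2 := hx 2%N isT;
have h3 := hx 3%N isT; have h4 := hx 4%N isT.
rewrite /qf.
have [c|c] := lerP (x 4%N) (x 3%N).
  have [hq hz] := qv_gen h0 h1 h2 h3 h4 c; split=> // /hz.
  by case=> -[? ? ?]; wit.
have [c1|c1] := lerP (x 0%N) (x 4%N).
  have [hq hz] := qv_gen h1 h2 h3 h4 h0 c1.
  have -> : qv (x 0%N) (x 1%N) (x 2%N) (x 3%N) (x 4%N) = qv (x 1%N) (x 2%N) (x 3%N) (x 4%N) (x 0%N) by rewrite /qv; ring.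
  split=> // /hz.
  by case=> -[? ? ?]; wit.
have [c2|c2] := lerP (x 1%N) (x 0%N).
  have [hq hz] := qv_gen h2 h3 h4 h0 h1 c2.
  have -> : qv (x 0%N) (x 1%N) (x 2%N) (x 3%N) (x 4%N) = qv (x 2%N) (x 3%N) (x 4%N) (x 0%N) (x 1%N) by rewrite /qv; ring.
  split=> // /hz.
  by case=> -[? ? ?]; wit.
have [c3|c3] := lerP (x 2%N) (x 1%N).
  have [hq hz] := qv_gen h3 h4 h0 h1 h2 c3.
  have -> : qv (x 0%N) (x 1%N) (x 2%N) (x 3%N) (x 4%N) = qv (x 3%N) (x 4%N) (x 0%N) (x 1%N) (x 2%N) by rewrite /qv; ring.
  split=> // /hz.
  by case=> -[? ? ?]; wit.
have [c4|c4] := lerP (x 3%N) (x 2%N).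
  have [hq hz] := qv_gen h4 h0 h1 h2 h3 c4.
  have -> : qv (x 0%N) (x 1%N) (x 2%N) (x 3%N) (x 4%N) = qv (x 4%N) (x 0%N) (x 1%N) (x 2%N) (x 3%N) by rewrite /qv; ring.
  split=> // /hz.
  by case=> -[? ? ?]; wit.
lra.
Qed.

Definition colv (t : nat) (a b : R) (i : nat) : R :=
  if i == t then a else if i == nx1 t then a + b else if i == nx2 t then b else 0.

Lemma cond_colv x (t : 'I_5) : cond x t -> forall i, (i < 5)%N ->
  x i = colv t (x t) (x (nx2 t)) i.
Proof.
case/and3P=> /eqP e3 /eqP e4 /eqP e1.
case: t e3 e4 e1 => [[|[|[|[|[|t]]]]] //= ht] e3 e4 e1;
by case=> [|[|[|[|[|i]]]]] //= _; rewrite /colv /=.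
Qed.

End Aux.

Set Implicit Arguments. Unset Strict Implicit. Unset Printing Implicit Defensive.

Section Str.
Variable R : realType.

Definition xs k (B : 'M[R]_(5,k)) (j : 'I_k) (i : nat) : R := B (inord i) j.

Lemma gram k (B : 'M[R]_(5,k)) i l :
  \sum_j xs B j i * xs B j l = (B *m B^T) (inord i) (inord l).
Proof. by rewrite mxE; apply: eq_bigr => j _; rewrite mxE. Qed.

Lemma circ_val (d e : R) i l : (i < 5)%N -> (l < 5)%N ->
  circ5 [:: d; e; 1; 1; e] (inord i) (inord l) =
  (if i == l then d else if (l == nx1 i) || (i == nx1 l) then e else 1).
Proof.
move=> hi hl; rewrite mxE !inordK //.
by case: i hi => [|[|[|[|[|i]]]]] //= _; case: l hl => [|[|[|[|[|l]]]]].
Qed.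

Lemma sumq k (B : 'M[R]_(5,k)) d e : B *m B^T = circ5 [:: d; e; 1; 1; e] ->
  \sum_j qf (xs B j) = 5 * d - 10 * e + 10.
Proof.
move=> hB.
rewrite /qf /qv.
rewrite !big_split /= sumrN -!mulr_sumr !big_split /= !gram hB !circ_val //=.
lra.
Qed.

Lemma colvP2 (t : nat) (a b : R) m : (t < 5)%N -> (m < 5)%N ->
  colv t a b m * colv t a b (nx2 m) = (if t == m then a*b else 0).
Proof.
by case: t => [|[|[|[|[|t]]]]] //= _; case: m => [|[|[|[|[|m]]]]] //= _;
  rewrite /colv /=; ring.
Qed.

Lemma colvP1 (t : nat) (a b : R) m : (t < 5)%N -> (m < 5)%N ->
  colv t a b m * colv t a b (nx1 m) =
  (if t == m then a^+2 else 0) + (if t == m then a*b else 0) +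
  (if t == nx4 m then a*b else 0) + (if t == nx4 m then b^+2 else 0).
Proof.
by case: t => [|[|[|[|[|t]]]]] //= _; case: m => [|[|[|[|[|m]]]]] //= _;
  rewrite /colv /=; ring.
Qed.

Definition tyB k (B : 'M[R]_(5,k)) j : nat :=
  if [pick t | cond (xs B j) t] is Some t then nat_of_ord t else 0%N.
Definition caB k (B : 'M[R]_(5,k)) j := xs B j (tyB B j).
Definition cbB k (B : 'M[R]_(5,k)) j := xs B j (nx2 (tyB B j)).
Definition PB k (B : 'M[R]_(5,k)) m :=
  \sum_j (if tyB B j == m then caB B j * cbB B j else 0).
Definition SB k (B : 'M[R]_(5,k)) m :=
  \sum_j (if tyB B j == m then caB B j ^+ 2 else 0).
Definition TB k (B : 'M[R]_(5,k)) m :=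
  \sum_j (if tyB B j == m then cbB B j ^+ 2 else 0).

Lemma nx_lt t : (t < 5)%N -> [/\ (nx1 t < 5)%N, (nx2 t < 5)%N, (nx3 t < 5)%N & (nx4 t < 5)%N].
Proof. by case: t => [|[|[|[|[|t]]]]]. Qed.

Lemma structure k (B : 'M[R]_(5,k)) (e : R) :
  nonneg_mx B -> B *m B^T = circ5 [:: 2 * e - 2; e; 1; 1; e] ->
  [/\ forall j, (tyB B j < 5)%N,
      forall j i, (i < 5)%N -> xs B j i = colv (tyB B j) (caB B j) (cbB B j) i,
      forall j, 0 <= caB B j /\ 0 <= cbB B j &
      forall m, (m < 5)%N -> PB B m = 1 /\ SB B m + TB B (nx4 m) = e - 2].
Proof.
move=> hnn hB.
have hq : forall j, qf (xs B j) = 0.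
  have hs := sumq hB.
  have h0 : \sum_j qf (xs B j) = 0 by rewrite hs; lra.
  have hge : forall j, 0 <= qf (xs B j).
    by move=> j; case: (horn (x := xs B j)) => // i _; apply: hnn.
  by move=> j; move/psumr_eq0P: h0 => ->.
have hty : forall j, (tyB B j < 5)%N /\
    forall i, (i < 5)%N -> xs B j i = colv (tyB B j) (caB B j) (cbB B j) i.
  move=> j; rewrite /caB /cbB /tyB.
  case: pickP => [t ht|hn].
    by split=> //; apply: cond_colv.
  case: (horn (x := xs B j)) => [i _|_ /(_ (hq j)) [t ht]]; first by apply: hnn.
  by move: (hn t); rewrite ht.
have hab : forall j, 0 <= caB B j /\ 0 <= cbB B j by move=> j; split; apply: hnn.
split=> //; first by move=> j; case: (hty j).
  by move=> j; case: (hty j).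
have hP : forall m, (m < 5)%N -> PB B m = 1.
  move=> m hm; have [h1 h2 h3 h4] := nx_lt hm.
  have eP : \sum_j xs B j m * xs B j (nx2 m) = PB B m.
    apply: eq_bigr => j _; case: (hty j) => ht hx.
    by rewrite !hx // colvP2.
  rewrite gram hB circ_val // in eP.
  by rewrite -eP; case: m hm {h1 h2 h3 h4 eP} => [|[|[|[|[|m]]]]].
move=> m hm; have [h1 h2 h3 h4] := nx_lt hm.
split; first exact: hP.
have eS : \sum_j xs B j m * xs B j (nx1 m) = SB B m + PB B m + PB B (nx4 m) + TB B (nx4 m).
  rewrite /SB /PB /TB -!big_split /=.
  apply: eq_bigr => j _; case: (hty j) => ht hx.
  by rewrite !hx // colvP1.
rewrite gram hB circ_val // !hP // in eS.
move: eS.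
by case: m hm {h1 h2 h3 h4} => [|[|[|[|[|m]]]]] //= _ hS; lra.
Qed.

End Str.

Set Implicit Arguments. Unset Strict Implicit. Unset Printing Implicit Defensive.

Section Cm.
Variable R : realType.

Definition cid (i l : nat) : nat :=
  if l == i then 0%N else if l == nx1 i then 1%N else if l == nx2 i then 2%N
  else if l == nx3 i then 3%N else 4%N.

Lemma circ_cid (r : seq R) (i l : 'I_5) : circ5 r i l = r`_(cid i l).
Proof.
rewrite mxE.
by case: i => [[|[|[|[|[|i]]]]] hi] //; case: l => [[|[|[|[|[|l]]]]] hl].
Qed.

Definition Fm (a b : R) : 'M[R]_5 := \matrix_(i, m) colv (nat_of_ord m) a b i.

Lemma F_gram a b : Fm a b *m (Fm a b)^T =
  circ5 [:: a*a + (a+b)*(a+b) + b*b; (a+b)*(a+b); a*b; a*b; (a+b)*(a+b)].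
Proof.
apply/matrixP => i l; rewrite circ_cid !mxE !big_ord_recr big_ord0 /= !mxE.
case: i => [[|[|[|[|[|i]]]]] hi] //; case: l => [[|[|[|[|[|l]]]]] hl] //;
 rewrite /colv /cid /=; ring.
Qed.

Lemma W2_entry (i m : 'I_5) : (W5 R *m W5 R) i m = colv m 1 1 i.
Proof.
rewrite !mxE !big_ord_recr big_ord0 /= !mxE.
case: i => [[|[|[|[|[|i]]]]] hi] //; case: m => [[|[|[|[|[|m]]]]] hm] //;
 rewrite /colv /=; ring.
Qed.

End Cm.

Set Implicit Arguments. Unset Strict Implicit. Unset Printing Implicit Defensive.

Section Ind.
Variable R : realType.

Lemma indep_det (u v : 'cV[R]_5) (r1 r2 : 'I_5) :
  u r1 0 * v r2 0 - u r2 0 * v r1 0 != 0 -> lin_indep2 u v.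
Proof.
move=> hd a b /matrixP h.
have h1 := h r1 0; have h2 := h r2 0; rewrite !mxE in h1 h2.
have ea : a * (u r1 0 * v r2 0 - u r2 0 * v r1 0) = 0.
  have -> : a * (u r1 0 * v r2 0 - u r2 0 * v r1 0) =
     v r2 0 * (a * u r1 0 + b * v r1 0) - v r1 0 * (a * u r2 0 + b * v r2 0) by ring.
  by rewrite h1 h2; ring.
have eb : b * (u r1 0 * v r2 0 - u r2 0 * v r1 0) = 0.
  have -> : b * (u r1 0 * v r2 0 - u r2 0 * v r1 0) =
     u r1 0 * (a * u r2 0 + b * v r2 0) - u r2 0 * (a * u r1 0 + b * v r1 0) by ring.
  by rewrite h1 h2; ring.
move/eqP: ea; rewrite mulf_eq0 (negbTE hd) orbF => /eqP ->.
by move/eqP: eb; rewrite mulf_eq0 (negbTE hd) orbF => /eqP ->.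
Qed.

Lemma pick_row t1 t2 : (t1 < 5)%N -> (t2 < 5)%N -> t1 != t2 ->
  exists2 r, r \in [:: t1; nx2 t1] & r \notin [:: t2; nx1 t2; nx2 t2].
Proof.
case: t1 => [|[|[|[|[|t1]]]]] //; case: t2 => [|[|[|[|[|t2]]]]] // _ _ _;
 first [ by exists 0%N | by exists 1%N | by exists 2%N | by exists 3%N | by exists 4%N].
Qed.

Lemma colv_in t (a b : R) r : (t < 5)%N -> r \in [:: t; nx2 t] -> 0 < a -> 0 < b ->
  (r < 5)%N /\ 0 < colv t a b r.
Proof.
move=> ht; rewrite !inE => /orP[] /eqP -> ha hb.
  by rewrite /colv eqxx.
by case: t ht => [|[|[|[|[|t]]]]] //.
Qed.

Lemma colv_out t (a b : R) r : r \notin [:: t; nx1 t; nx2 t] -> colv t a b r = 0.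
Proof.
rewrite !inE !negb_or => /and3P[h1 h2 h3].
by rewrite /colv (negbTE h1) (negbTE h2) (negbTE h3).
Qed.

Lemma colv_t t (a b : R) : colv t a b t = a.
Proof. by rewrite /colv eqxx. Qed.

Lemma colv_t2 t (a b : R) : (t < 5)%N -> colv t a b (nx2 t) = b.
Proof. by case: t => [|[|[|[|[|t]]]]]. Qed.

Lemma colmx_indep k (M : 'M[R]_(5,k)) (ty : 'I_k -> nat) (ca cb : 'I_k -> R) :
  (forall (i : 'I_5) j, M i j = colv (ty j) (ca j) (cb j) i) ->
  (forall j, (ty j < 5)%N) -> (forall j, 0 < ca j /\ 0 < cb j) ->
  (forall j1 j2, j1 != j2 -> ty j1 = ty j2 -> ca j1 * cb j2 != ca j2 * cb j1) ->
  forall j1 j2, j1 != j2 -> lin_indep2 (col j1 M) (col j2 M).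
Proof.
move=> hM hty hp hs j1 j2 hj.
have [e|ne] := eqVneq (ty j1) (ty j2).
  apply: (@indep_det _ _ (inord (ty j1)) (inord (nx2 (ty j1)))).
  have h2 : (nx2 (ty j1) < 5)%N by case: (nx_lt (hty j1)).
  rewrite !mxE !hM !inordK // -e !colv_t !colv_t2 //.
  by rewrite subr_eq0 [cb j1 * _]mulrC; apply: hs.
have [r1 hr1 hn1] := pick_row (hty j1) (hty j2) ne.
have ne' : ty j2 != ty j1 by rewrite eq_sym.
have [r2 hr2 hn2] := pick_row (hty j2) (hty j1) ne'.
have [p1 p2] := hp j1; have [q1 q2] := hp j2.
have [lt1 g1] := colv_in (hty j1) hr1 p1 p2.
have [lt2 g2] := colv_in (hty j2) hr2 q1 q2.
apply: (@indep_det _ _ (inord r1) (inord r2)).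
rewrite !mxE !hM !inordK // (colv_out _ _ hn1) (colv_out _ _ hn2) mulr0 subr0.
by apply: lt0r_neq0; apply: mulr_gt0.
Qed.

End Ind.

Set Implicit Arguments. Unset Strict Implicit. Unset Printing Implicit Defensive.

Section Cons.
Variable R : realType.

Lemma xsE k (B : 'M[R]_(5,k)) j (i : 'I_5) : xs B j i = B i j.
Proof. by rewrite /xs inord_val. Qed.

Lemma hit k (B : 'M[R]_(5,k)) m : PB B m = 1 -> exists j, tyB B j = m.
Proof.
move=> hP; case: (pickP (fun j => tyB B j == m)) => [j /eqP hj|hn]; first by exists j.
move: hP; rewrite /PB big1 => [|j _]; last by rewrite hn.
move/eqP; rewrite eq_sym oner_eq0 //.
Qed.

Lemma lower k (B : 'M[R]_(5,k)) : (forall m, (m < 5)%N -> PB B m = 1) -> (5 <= k)%N.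
Proof.
move=> hP.
have := @uniq_leq_size _ (iota 0 5) [seq tyB B j | j <- enum 'I_k] (iota_uniq 0 5).
rewrite size_map size_enum_ord size_iota; apply => m; rewrite mem_iota add0n => /andP[_ hm].
by have [j hj] := hit (hP m hm); apply/mapP; exists j; rewrite ?mem_enum.
Qed.

Lemma inj5 (ty : 'I_5 -> nat) : (forall m, (m < 5)%N -> exists j, ty j = m) -> injective ty.
Proof.
move=> hh j1 j2 e; apply/eqP; apply: contraT => ne.
have hs : {subset iota 0 5 <= [seq ty j | j <- enum (predC1 j2)]}.
  move=> m; rewrite mem_iota add0n => /andP[_ hm].
  have [j hj] := hh m hm.
  apply/mapP; have [ej|nj] := eqVneq j j2.
    by exists j1; rewrite ?mem_enum ?inE // e -ej.
  by exists j; rewrite ?mem_enum ?inE.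
have := uniq_leq_size (iota_uniq 0 5) hs.
by rewrite size_map -cardE cardC1 card_ord size_iota.
Qed.

Lemma sum_single k (ty : 'I_k -> nat) (f : 'I_k -> R) j0 : injective ty ->
  \sum_j (if ty j == ty j0 then f j else 0) = f j0.
Proof.
move=> hi; rewrite (bigD1 j0) //= eqxx big1 ?addr0 // => j hj.
by rewrite ifF //; apply/negbTE; apply: contra hj => /eqP /hi ->.
Qed.

Lemma colv_scale t (c a b : R) i : colv t (c * a) (c * b) i = c * colv t a b i.
Proof. rewrite /colv; case: ifP => _; first ring; case: ifP => _; first ring; case: ifP => _; ring. Qed.

Lemma circA' : circ5 [:: 6; 4; 1; 1; 4] = circ5 [:: 2 * 4 - 2; 4; 1; 1; 4] :> 'M[R]_5.
Proof. by congr (circ5 [:: _; _; _; _; _]); lra. Qed.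
Lemma circA : circ5 [:: 8; 5; 1; 1; 5] = circ5 [:: 2 * 5 - 2; 5; 1; 1; 5] :> 'M[R]_5.
Proof. by congr (circ5 [:: _; _; _; _; _]); lra. Qed.

Lemma Aprime_unique k (C : 'M[R]_(5,k)) :
  cp_factorization (circ5 [:: 6;4;1;1;4]) C -> cp_equiv (W5 R *m W5 R) C.
Proof.
case=> hnn hind hC.
have hC' : C *m C^T = circ5 [:: 2 * 4 - 2; 4; 1; 1; 4] by rewrite -hC circA'.
have [hty hx hab hPS] := structure hnn hC'.
have hD : forall m, \sum_j (if tyB C j == m then (caB C j - cbB C j) ^+ 2 else 0)
    = SB C m - 2 * PB C m + TB C m.
  move=> m; rewrite /SB /PB /TB mulr_sumr -sumrB -big_split /=.
  by apply: eq_bigr => j _; case: ifP => _; ring.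
have hD0 : forall m, 0 <= \sum_j (if tyB C j == m then (caB C j - cbB C j) ^+ 2 else 0).
  by move=> m; apply: sumr_ge0 => j _; case: ifP => _ //; apply: sqr_ge0.
have [P0 ST0] := hPS 0%N isT; have [P1 ST1] := hPS 1%N isT; have [P2 ST2] := hPS 2%N isT.
have [P3 ST3] := hPS 3%N isT; have [P4 ST4] := hPS 4%N isT.
move: ST0 ST1 ST2 ST3 ST4; rewrite /nx4 /nx3 /nx2 /nx1 /= => ST0 ST1 ST2 ST3 ST4.
have D0 := hD0 0%N; have D1 := hD0 1%N; have D2 := hD0 2%N; have D3 := hD0 3%N;
have D4 := hD0 4%N.
rewrite hD in D0; rewrite hD in D1; rewrite hD in D2; rewrite hD in D3; rewrite hD in D4.
have hDz : forall m, (m < 5)%N ->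
   \sum_j (if tyB C j == m then (caB C j - cbB C j) ^+ 2 else 0) = 0.
  move=> m; rewrite hD.
  by case: m => [|[|[|[|[|m]]]]] //= _; lra.
have hab_eq : forall j, caB C j = cbB C j.
  move=> j.
  have h0 : forall (m : nat) (j' : 'I_k), true ->
      0 <= (if tyB C j' == m then (caB C j' - cbB C j') ^+ 2 else 0).
    by move=> m j' _; case: ifP => _ //; apply: sqr_ge0.
  have := @psumr_eq0P _ _ _ _ (h0 (tyB C j)) (hDz _ (hty j)) j isT.
  by rewrite eqxx => /eqP; rewrite sqrf_eq0 subr_eq0 => /eqP.
have hS1 : forall m, (m < 5)%N -> SB C m = 1.
  move=> m hm; rewrite -(proj1 (hPS m hm)) /SB /PB.
  by apply: eq_bigr => j _; rewrite hab_eq expr2.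
have hCe : forall (i : 'I_5) j, C i j = colv (tyB C j) (caB C j) (caB C j) i.
  by move=> i j; rewrite -xsE hx // hab_eq.
have k5 : (5 <= k)%N by apply: lower => m hm; exact: (proj1 (hPS m hm)).
have hcol : forall j, col j C = caB C j *: \matrix_(i < 5, z < 1) colv (tyB C j) 1 1 i.
  by move=> j; apply/matrixP => i z; rewrite !mxE hCe -colv_scale !mulr1.
have hnz : forall j, caB C j != 0.
  move=> j; apply/negP => /eqP h0.
  have [j' hj'] : exists j' : 'I_k, j' != j.
    have [e|ne] := eqVneq (nat_of_ord j) 0%N.
      exists (Ordinal (leq_trans (isT : (1 < 5)%N) k5)); apply/negP => /eqP/(congr1 val).
      by rewrite /= e.
    exists (Ordinal (leq_trans (isT : (0 < 5)%N) k5)); apply/negP => /eqP/(congr1 val).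
    by move=> /= h; rewrite -h in ne.
  have hjj : j != j' by rewrite eq_sym.
  have h10 : (1 : R) *: col j C + 0 *: col j' C = 0.
    by rewrite hcol h0 !scale0r scale1r add0r.
  by have [/eqP] := hind j j' hjj 1 0 h10; rewrite oner_eq0.
have hinj : injective (tyB C).
  move=> j1 j2 e; apply/eqP; apply: contraT => ne.
  have h10 : caB C j2 *: col j1 C + (- caB C j1) *: col j2 C = 0.
    by rewrite !hcol e !scalerA mulNr mulrC scaleNr subrr.
  have [h _] := hind j1 j2 ne _ _ h10.
  by move: (hnz j2); rewrite h eqxx.
have hca1 : forall j, caB C j = 1.
  move=> j; have := hS1 _ (hty j); rewrite /SB sum_single // => h.
  have := (hab j).1; move: h; nra.
have kle : (k <= 5)%N.
  have := @uniq_leq_size _ [seq tyB C j | j <- enum 'I_k] (iota 0 5).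
  rewrite size_map size_enum_ord size_iota; apply.
    by rewrite map_inj_uniq // enum_uniq.
  by move=> m /mapP[j _ ->]; rewrite mem_iota add0n hty.
have ek : k = 5%N by apply/eqP; rewrite eqn_leq kle k5.
subst k.
have sinj : injective (fun j : 'I_5 => (inord (tyB C j) : 'I_5)).
  by move=> j1 j2 /(congr1 val) /=; rewrite !inordK //; apply: hinj.
exists erefl; exists (perm sinj)^-1%g.
rewrite castmx_id -col_permE; apply/matrixP => i j.
by rewrite mxE permE W2_entry inordK // hCe hca1.
Qed.

End Cons.

Set Implicit Arguments. Unset Strict Implicit. Unset Printing Implicit Defensive.

Section Real.
Variable R : realType.

Lemma stlt (x y x' y' : R) : 0 <= x -> 0 <= y -> 0 <= x' -> 0 <= y' ->
  x * y = 1 -> x' * y' = 1 -> x ^+ 2 < x' ^+ 2 -> y' ^+ 2 < y ^+ 2.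
Proof.
move=> hx hy hx' hy' e e' h.
have lx : x < x'.
  rewrite ltNge; apply/negP => hle.
  have := ler_pM hx' hx' hle hle; rewrite -!expr2 => h2; lra.
have py' : 0 < y'.
  rewrite lt_def hy' andbT; apply/negP => /eqP h0; move: e'; rewrite h0 mulr0; lra.
have ly : y' < y.
  rewrite ltNge; apply/negP => hle.
  have h1 : x * y <= x * y' by apply: ler_wpM2l.
  have h2 : x * y' < x' * y' by rewrite ltr_pM2r.
  lra.
by rewrite ltrXn2r.
Qed.

Lemma steq (x y x' y' : R) : 0 <= x -> 0 <= y -> 0 <= x' -> 0 <= y' ->
  x * y = 1 -> x' * y' = 1 -> x ^+ 2 = x' ^+ 2 -> x = x' /\ y = y'.
Proof.
move=> hx hy hx' hy' e e' h.
have ex : x = x'.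
  case: (ltrgtP x x') => // c.
    by move: h; have := ltrXn2r 2 hx c; rewrite /= => /[swap] ->; rewrite ltxx.
  by move: h; have := ltrXn2r 2 hx' c; rewrite /= => /[swap] ->; rewrite ltxx.
subst x'; split=> //.
have py : 0 < x by rewrite lt_def hx andbT; apply/negP => /eqP h0; move: e; rewrite h0 mul0r; lra.
have : x * (y - y') = 0 by rewrite mulrBr e e' subrr.
by move/eqP; rewrite mulf_eq0 (gt_eqF py) /= subr_eq0 => /eqP.
Qed.

Lemma cyc5 (a b : nat -> R) :
  (forall i, (i < 5)%N -> [/\ 0 <= a i, 0 <= b i & a i * b i = 1]) ->
  (forall i, (i < 5)%N -> a (nx1 i) ^+ 2 + b i ^+ 2 = 3) ->
  forall i, (i < 5)%N -> a i = a 0%N /\ b i = b 0%N.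
Proof.
move=> hp hr.
have up : forall i, (i < 5)%N -> a i ^+ 2 < a (nx1 i) ^+ 2 -> a (nx1 i) ^+ 2 < a (nx2 i) ^+ 2.
  move=> i hi h.
  have [h1 h2 h3 h4] := nx_lt hi.
  have [p1 p2 p3] := hp i hi; have [q1 q2 q3] := hp _ h1.
  have := stlt p1 p2 q1 q2 p3 q3 h.
  have := hr _ hi; have := hr _ h1; rewrite /nx2; lra.
have dn : forall i, (i < 5)%N -> a (nx1 i) ^+ 2 < a i ^+ 2 -> a (nx2 i) ^+ 2 < a (nx1 i) ^+ 2.
  move=> i hi h.
  have [h1 h2 h3 h4] := nx_lt hi.
  have [p1 p2 p3] := hp i hi; have [q1 q2 q3] := hp _ h1.
  have := stlt q1 q2 p1 p2 q3 p3 h.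
  have := hr _ hi; have := hr _ h1; rewrite /nx2; lra.
have e01 : a 0%N ^+ 2 = a 1%N ^+ 2.
  case: (ltrgtP (a 0%N ^+ 2) (a 1%N ^+ 2)) => // c.
    have c1 := up 0%N isT c; have c2 := up 1%N isT c1; have c3 := up 2%N isT c2;
    have c4 := up 3%N isT c3; move: c1 c2 c3 c4; rewrite /nx2 /nx1 /=; lra.
  have c1 := dn 0%N isT c; have c2 := dn 1%N isT c1; have c3 := dn 2%N isT c2;
  have c4 := dn 3%N isT c3; move: c1 c2 c3 c4; rewrite /nx2 /nx1 /=; lra.
have st : forall i, (i < 5)%N -> a i ^+ 2 = a (nx1 i) ^+ 2 ->
    [/\ a i = a (nx1 i), b i = b (nx1 i) & a (nx1 i) ^+ 2 = a (nx2 i) ^+ 2].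
  move=> i hi h.
  have [h1 h2 h3 h4] := nx_lt hi.
  have [p1 p2 p3] := hp i hi; have [q1 q2 q3] := hp _ h1.
  have [ea eb] := steq p1 p2 q1 q2 p3 q3 h.
  split=> //.
  have := hr _ hi; have := hr _ h1; rewrite /nx2 -eb; lra.
have [a1 b1 e12] := st 0%N isT e01.
have [a2 b2 e23] := st 1%N isT e12.
have [a3 b3 e34] := st 2%N isT e23.
have [a4 b4 e45] := st 3%N isT e34.
move: a1 b1 a2 b2 a3 b3 a4 b4; rewrite /nx1 /= => a1 b1 a2 b2 a3 b3 a4 b4.
by case=> [|[|[|[|[|i]]]]] //= _; split; lra.
Qed.

Definition r5 : R := Num.sqrt 5.
Definition phi : R := (r5 + 1) / 2.
Definition psi : R := (r5 - 1) / 2.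

Lemma r5_facts : r5 ^+ 2 = 5 /\ 2 < r5.
Proof.
have h : r5 ^+ 2 = 5 by rewrite /r5 sqr_sqrtr //; lra.
have h0 : 0 <= r5 by apply: sqrtr_ge0.
split=> //; move: h; rewrite expr2 => h; nra.
Qed.

Lemma phipsi : [/\ phi * psi = 1, phi ^+ 2 + psi ^+ 2 = 3, 0 < psi, 0 < phi & phi - psi = 1].
Proof.
have [h1 h2] := r5_facts; move: h1; rewrite expr2 => h1.
rewrite /phi /psi !expr2; split; try lra.
Qed.

Lemma ab_cases (a b : R) : 0 <= a -> 0 <= b -> a * b = 1 -> a ^+ 2 + b ^+ 2 = 3 ->
  (a = phi /\ b = psi) \/ (a = psi /\ b = phi).
Proof.
move=> ha hb e s.
have [h1 h2] := r5_facts.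
have es : a + b = r5.
  have : (a + b - r5) * (a + b + r5) = 0.
    have -> : (a + b - r5) * (a + b + r5) = (a ^+ 2 + b ^+ 2) + 2 * (a * b) - r5 ^+ 2 by ring.
    by rewrite s e h1; ring.
  move/eqP; rewrite mulf_eq0 => /orP[/eqP h|/eqP h]; lra.
have : (a - b - 1) * (a - b + 1) = 0.
  have -> : (a - b - 1) * (a - b + 1) = (a ^+ 2 + b ^+ 2) - 2 * (a * b) - 1 by ring.
  by rewrite s e; ring.
rewrite /phi /psi.
move/eqP; rewrite mulf_eq0 => /orP[/eqP h|/eqP h]; [left|right]; split; lra.
Qed.

End Real.

Set Implicit Arguments. Unset Strict Implicit. Unset Printing Implicit Defensive.

Section AM.
Variable R : realType.

Lemma A_min (B : 'M[R]_5) : nonneg_mx B -> B *m B^T = circ5 [:: 8; 5; 1; 1; 5] ->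
  exists a b : R, [/\ 0 <= a, 0 <= b, a * b = 1, a ^+ 2 + b ^+ 2 = 3 &
     exists s : 'S_5, B = col_perm s (Fm a b)].
Proof.
move=> hnn hB.
have hB' : B *m B^T = circ5 [:: 2 * 5 - 2; 5; 1; 1; 5] by rewrite hB circA.
have [hty hx hab hPS] := structure hnn hB'.
have hhit : forall m, (m < 5)%N -> exists j, tyB B j = m.
  by move=> m hm; apply: hit; case: (hPS m hm).
have hinj := inj5 hhit.
pose jm (m : nat) : 'I_5 := odflt ord0 [pick j | tyB B j == m].
have hjm : forall m, (m < 5)%N -> tyB B (jm m) = m.
  move=> m hm; rewrite /jm; case: pickP => [j /eqP //|hn].
  by have [j hj] := hhit m hm; move: (hn j); rewrite hj eqxx.
pose a m := caB B (jm m); pose b m := cbB B (jm m).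
have hsum : forall (f : 'I_5 -> R) m, (m < 5)%N ->
    \sum_j (if tyB B j == m then f j else 0) = f (jm m).
  by move=> f m hm; rewrite -{1}(hjm m hm) sum_single.
have hnx41 : forall i, (i < 5)%N -> nx4 (nx1 i) = i by case=> [|[|[|[|[|i]]]]].
have hp : forall i, (i < 5)%N -> [/\ 0 <= a i, 0 <= b i & a i * b i = 1].
  move=> i hi; have [h _] := hPS i hi; move: h; rewrite /PB hsum // => h.
  by split=> //; case: (hab (jm i)).
have hr : forall i, (i < 5)%N -> a (nx1 i) ^+ 2 + b i ^+ 2 = 3.
  move=> i hi; have [h1 _ _ _] := nx_lt hi.
  have [_ h] := hPS _ h1; move: h; rewrite hnx41 // /SB /TB !hsum //; rewrite /a /b; lra.
have hc := cyc5 hp hr.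
have hcol : forall j, caB B j = a 0%N /\ cbB B j = b 0%N.
  move=> j; have e : jm (tyB B j) = j by apply: hinj; rewrite hjm.
  by have [<- <-] := hc _ (hty j); rewrite /a /b e.
exists (a 0%N), (b 0%N).
have [p1 p2 p3] := hp 0%N isT.
split=> //.
  have := hr 0%N isT; have [e1 e2] := hc (nx1 0) isT; rewrite e1 //.
have sinj : injective (fun j : 'I_5 => (inord (tyB B j) : 'I_5)).
  by move=> j1 j2 /(congr1 val) /=; rewrite !inordK //; apply: hinj.
exists (perm sinj); apply/matrixP => i j.
rewrite [RHS]mxE permE mxE inordK // -xsE hx //.
by have [-> ->] := hcol j.
Qed.

End AM.

Set Implicit Arguments. Unset Strict Implicit. Unset Printing Implicit Defensive.

Section Fin.
Variable R : realType.

Lemma colv_ge0 t (a b : R) i : 0 <= a -> 0 <= b -> 0 <= colv t a b i.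
Proof.
move=> ha hb; rewrite /colv; case: ifP => _ //; case: ifP => _; first exact: addr_ge0.
by case: ifP.
Qed.

Lemma F_cp (a b : R) : 0 < a -> 0 < b -> a * b = 1 -> a ^+ 2 + b ^+ 2 = 3 ->
  cp_factorization (circ5 [:: 8; 5; 1; 1; 5]) (Fm a b).
Proof.
move=> ha hb e s; split.
- by move=> i j; rewrite mxE; apply: colv_ge0; apply: ltW.
- apply: (@colmx_indep _ _ _ (fun j => nat_of_ord j) (fun _ => a) (fun _ => b)).
  + by move=> i j; rewrite mxE.
  + by move=> j; apply: ltn_ord.
  + by move=> j; split.
  + by move=> j1 j2 ne /val_inj e'; move: ne; rewrite e' eqxx.
- rewrite F_gram; move: s; rewrite expr2 => s.
  congr (circ5 [:: _; _; _; _; _]); rewrite ?e; lra.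
Qed.

Definition F1 : 'M[R]_5 := Fm (phi R) (psi R).
Definition F2 : 'M[R]_5 := Fm (psi R) (phi R).

Lemma F1_cp : cp_factorization (circ5 [:: 8; 5; 1; 1; 5]) F1.
Proof.
have [e s p1 p2 _] := @phipsi R.
by apply: F_cp.
Qed.

Lemma F2_cp : cp_factorization (circ5 [:: 8; 5; 1; 1; 5]) F2.
Proof.
have [e s p1 p2 _] := @phipsi R.
by apply: F_cp => //; lra.
Qed.

Lemma lowerA k (B : 'M[R]_(5,k)) : nonneg_mx B -> circ5 [:: 8; 5; 1; 1; 5] = B *m B^T ->
  (5 <= k)%N.
Proof.
move=> hnn hB.
have hB' : B *m B^T = circ5 [:: 2 * 5 - 2; 5; 1; 1; 5] by rewrite -hB circA.
have [_ _ _ hPS] := structure hnn hB'.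
by apply: lower => m hm; exact: (proj1 (hPS m hm)).
Qed.

Lemma F1_min : minimal_cp_factorization (circ5 [:: 8; 5; 1; 1; 5]) F1.
Proof. by split; [exact: F1_cp | move=> k B hn hB; exact: lowerA hn hB]. Qed.
Lemma F2_min : minimal_cp_factorization (circ5 [:: 8; 5; 1; 1; 5]) F2.
Proof. by split; [exact: F2_cp | move=> k B hn hB; exact: lowerA hn hB]. Qed.

Lemma F12_neq : ~ cp_equiv F1 F2.
Proof.
case=> e [s]; rewrite castmx_id -[s]invgK -col_permE => /matrixP h.
have h0 := h (@Ordinal 5 0 isT) ord0; have h1 := h (@Ordinal 5 1 isT) ord0.
move: h0 h1; rewrite !mxE.
have [_ _ p1 p2 d] := @phipsi R.
case: (s^-1%g ord0) => [[|[|[|[|[|t]]]]] ht] //=; rewrite /colv /=; lra.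
Qed.

End Fin.

Set Implicit Arguments. Unset Strict Implicit. Unset Printing Implicit Defensive.

Section Fam.
Variable R : realType.

Definition Bw (u v : R) : 'M[R]_(5, 5 + 5) := row_mx (u *: F1 R) (v *: F2 R).

Lemma trZ m n (c : R) (X : 'M[R]_(m,n)) : (c *: X)^T = c *: X^T.
Proof. by apply/matrixP => i j; rewrite !mxE. Qed.

Definition tyw (j : 'I_(5+5)) : nat := match split j with inl m => nat_of_ord m | inr m => nat_of_ord m end.
Definition caw (u v : R) (j : 'I_(5+5)) : R :=
  match split j with inl _ => u * phi R | inr _ => v * psi R end.
Definition cbw (u v : R) (j : 'I_(5+5)) : R :=
  match split j with inl _ => u * psi R | inr _ => v * phi R end.

Lemma Bw_entry u v (i : 'I_5) j : Bw u v i j = colv (tyw j) (caw u v j) (cbw u v j) i.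
Proof.
rewrite /Bw /tyw /caw /cbw mxE; case: (split j) => m; by rewrite !mxE colv_scale.
Qed.

Lemma Bw_cp (u v : R) : 0 < u -> 0 < v -> u * u + v * v = 1 ->
  cp_factorization (circ5 [:: 8; 5; 1; 1; 5]) (Bw u v).
Proof.
move=> hu hv huv.
have [e s p1 p2 d] := @phipsi R.
split.
- move=> i j; rewrite Bw_entry /caw /cbw; case: (split j) => m;
  apply: colv_ge0; apply: mulr_ge0; apply: ltW => //.
- apply: (@colmx_indep _ _ _ tyw (caw u v) (cbw u v)).
  + by move=> i j; rewrite Bw_entry.
  + by move=> j; rewrite /tyw; case: (split j) => m; apply: ltn_ord.
  + by move=> j; rewrite /caw /cbw; case: (split j) => m; split; apply: mulr_gt0.
  + move=> j1 j2 ne; rewrite /tyw /caw /cbw.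
    have k1 := splitK j1; have k2 := splitK j2.
    case: (split j1) k1 => m1 k1; case: (split j2) k2 => m2 k2 /val_inj em;
      subst m2; rewrite -?k1 -?k2 ?eqxx // in ne;
      rewrite -subr_eq0.
    * have -> : u * phi R * (v * phi R) - v * psi R * (u * psi R) =
         (u * v) * ((phi R - psi R) * (phi R + psi R)) by ring.
      by rewrite d mul1r; apply: lt0r_neq0; apply: mulr_gt0; [apply: mulr_gt0|apply: addr_gt0].
    * have -> : v * psi R * (u * psi R) - u * phi R * (v * phi R) =
         - ((u * v) * ((phi R - psi R) * (phi R + psi R))) by ring.
      rewrite d mul1r oppr_eq0; apply: lt0r_neq0; apply: mulr_gt0; [apply: mulr_gt0|apply: addr_gt0] => //.
- rewrite /Bw tr_row_mx mul_row_col !trZ -!scalemxAl -!scalemxAr !scalerA.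
  have [_ _ hF1] := F1_cp R; have [_ _ hF2] := F2_cp R.
  by rewrite -hF1 -hF2 -scalerDl huv scale1r.
Qed.

Definition invB n (C : 'M[R]_(5,n)) : R :=
  \sum_j (C (@Ordinal 5 0 isT) j * C (@Ordinal 5 2 isT) j) ^+ 2.

Lemma inv_perm n (C : 'M[R]_(5,n)) (s : 'S_n) : invB (C *m perm_mx s) = invB C.
Proof.
rewrite -[s]invgK -col_permE /invB.
under eq_bigr do rewrite !mxE.
by apply/esym/reindex_inj/perm_inj.
Qed.

Lemma inv_Bw u v : invB (Bw u v) = (u * u) ^+ 2 + (v * v) ^+ 2.
Proof.
have [e _ _ _ _] := @phipsi R.
rewrite /invB big_split_ord /= /Bw.
under eq_bigr do rewrite !row_mxEl.
under [X in _ + X = _]eq_bigr do rewrite !row_mxEr.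
rewrite !big_ord_recr !big_ord0 /= !mxE /colv /=.
transitivity ((u*u)^+2 * (phi R * psi R)^+2 + (v*v)^+2 * (phi R * psi R)^+2); first ring.
by rewrite e expr1n !mulr1.
Qed.
End Fam.

Unset Implicit Arguments.
Set Strict Implicit.

Lemma W2_cp (R : realType) : cp_factorization (circ5 [:: 6; 4; 1; 1; 4]) (W5 R *m W5 R).
Proof.
have hW : W5 R *m W5 R = Fm 1 1 by apply/matrixP => i j; rewrite W2_entry mxE.
rewrite hW; split.
- by move=> i j; rewrite mxE; apply: colv_ge0.
- apply: (@colmx_indep _ _ _ (fun j => nat_of_ord j) (fun _ => 1) (fun _ => 1)).
  + by move=> i j; rewrite mxE.
  + by move=> j; apply: ltn_ord.
  + by move=> j; split; apply: ltr01.
  + by move=> j1 j2 ne /val_inj e'; move: ne; rewrite e' eqxx.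
- rewrite F_gram; congr (circ5 [:: _; _; _; _; _]); lra.
Qed.

Definition wv (R : realType) (m : nat) : R := ((m + 3)%:R)^-1.

Lemma wv_facts (R : realType) m : 0 < wv R m /\ wv R m <= 1/3.
Proof.
have hn : (3 : R) <= (m + 3)%:R by rewrite natrD; have := ler0n R m; lra.
have e : wv R m * (m + 3)%:R = 1 by rewrite /wv mulVf //; apply: lt0r_neq0; lra.
have p : 0 < wv R m by rewrite /wv invr_gt0; lra.
split=> //; nra.
Qed.

Definition fam (R : realType) (m : nat) : fact_of R 5 :=
  existT _ (5 + 5)%N (Bw (Num.sqrt (wv R m)) (Num.sqrt (1 - wv R m))).

Theorem mainTheorem10 (R : realType) :
  let A : 'M[R]_5 := circ5 [:: 8; 5; 1; 1; 5] in
  let A' : 'M[R]_5 := circ5 [:: 6; 4; 1; 1; 4] in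
  let W2 : 'M[R]_5 := W5 R *m W5 R in
  (* A *)
  [/\ completely_positive A,
      (* exactly two minimal CP factorizations (up to column permutation) *)
      (exists F1 F2 : fact_of R 5,
         [/\ minimal_cp_factorization A (projT2 F1),
             minimal_cp_factorization A (projT2 F2),
             ~ fequiv F1 F2
           & forall G : fact_of R 5, minimal_cp_factorization A (projT2 G) ->
               fequiv G F1 \/ fequiv G F2]),
      (* infinitely many CP factorizations (pairwise distinct) *)
      (exists f : nat -> fact_of R 5,
         (forall m, cp_factorization A (projT2 (f m))) /\
         (forall m1 m2, m1 <> m2 -> ~ fequiv (f m1) (f m2))),
      (* A' *)
      completely_positive A'
    & (* unique CP factorization A' = W^2 (W^2)^T *)
      cp_factorization A' W2 /\
      (forall k (C : 'M[R]_(5, k)), cp_factorization A' C -> cp_equiv W2 C)].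
Proof.
move=> A A' W2; rewrite /A /A' /W2.
split.
- have [h1 _ h3] := F1_cp R; by exists 5%N, (F1 R).
- exists (existT _ 5%N (F1 R)), (existT _ 5%N (F2 R)); split.
  + exact: F1_min.
  + exact: F2_min.
  + exact: F12_neq.
  + move=> [k B] /=; move=> [[hnn hind hB] hmin].
    have k5 := lowerA hnn hB.
    have [f1n _ f1e] := F1_cp R.
    have k5' := hmin 5%N (F1 R) f1n f1e.
    have ek : k = 5%N by apply/eqP; rewrite eqn_leq k5 k5'.
    subst k.
    have [a [b [ha hb e s [sg hsg]]]] := A_min hnn (esym hB).
    have hF : forall a b : R, Fm a b = castmx (erefl 5%N, erefl 5%N) B *m perm_mx sg ->
       cp_equiv B (Fm a b).
      by move=> a' b' h; exists erefl; exists sg.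
    have hBF : Fm a b = castmx (erefl 5%N, erefl 5%N) B *m perm_mx sg.
      by rewrite castmx_id hsg col_permE -mulmxA -perm_mxM mulVg perm_mx1 mulmx1.
    case: (ab_cases ha hb e s) => [[ea eb]|[ea eb]]; [left|right];
      rewrite /fequiv /=; apply: hF; by rewrite -ea -eb.
- exists (fam R); split.
  + move=> m; have [p q] := wv_facts R m; rewrite /fam /=.
    apply: Bw_cp.
    * by rewrite sqrtr_gt0.
    * by rewrite sqrtr_gt0; lra.
    * by rewrite -!expr2 !sqr_sqrtr; lra.
  + move=> m1 m2 ne; rewrite /fequiv /fam /=; move=> [e [s h]].
    have := congr1 (@invB R _) h.
    rewrite castmx_id inv_perm !inv_Bw.
    have [p1 q1] := wv_facts R m1; have [p2 q2] := wv_facts R m2.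
    rewrite -!expr2 !sqr_sqrtr; try lra.
    move=> hw.
    have ew : wv R m2 = wv R m1.
      have : (wv R m2 - wv R m1) * (wv R m2 + wv R m1 - 1) = 0.
        by move: hw; rewrite !expr2 => hw; lra.
      by move/eqP; rewrite mulf_eq0 => /orP[/eqP|/eqP] h'; lra.
    apply: ne; move: ew; rewrite /wv => /invr_inj /eqP; rewrite eqr_nat eqn_add2r.
    by move/eqP.
- have [h1 _ h3] := W2_cp R; by exists 5%N, (W5 R *m W5 R).
- split; first exact: W2_cp.
  by move=> k C; apply: Aprime_unique.
Qed.
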